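(* Let $(P,\leqslant)$ be a conditionally-complete interpolating poset, let $P^* := \{x \in P : \exists\, y \in P,\ y \ll x\}$, and let $Q$ be a kernel retract of $P^*$. Then $Q$ is a conditionally-complete subposet of $P$. Moreover, for every nonempty subset $D$ of $Q$ bounded above in $P$, the supremum of $D$ in $Q$ exists and equals its supremum $\bigvee D$ in $P$.
   Context: A poset is conditionally-complete if every nonempty subset bounded above has a supremum. A nonempty subset $D$ is directed if any two elements of $D$ have an upper bound in $D$. For a poset $R$ and $x,y \in R$, $x \ll_R y$ ($x$ way-below $y$ in $R$) means: for every directed subset $D$ of $R$ bounded above in $R$ with supremum $d_0$ in $R$, $y \leqslant d_0$ implies $x \leqslant d$ for some $d \in D$; write $\ll$ for $\ll_P$. $P$ is interpolating if whenever $x \ll y$ there is $z$ with $x \ll z \ll y$. A kernel on $P^*$ is a map $j: P^* \to P^*$ with $j(j(x)) = j(x)$, $x \leqslant y \Rightarrow j(x) \leqslant j(y)$, and $j(x) \leqslant x$ for all $x,y \in P^*$. A kernel retraction is a map $k: P^* \to Q$, where $Q = \{x \in P^* : k(x) = x\}$, such that $x \mapsto k(x)$ is a kernel on $P^*$ and for every directed subset $D$ of $P^*$ bounded above, $k(\bigvee D) = \bigvee_Q k(D)$ (supremum in $Q$); such a $Q$ is called a kernel retract of $P^*$. A subset $Q \subseteq P$ (with the induced order) is a subposet of $P$ if for all $x,y \in Q$: $x \ll_Q y \iff x \ll y$. *)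

(* Defs.v *)
From mathcomp Require Import all_boot all_order.
Set Implicit Arguments. Unset Strict Implicit. Unset Printing Implicit Defensive.
Import Order.TTheory.
Local Open Scope order_scope.

(* Subsets of a poset T are predicates T -> Prop; a subset S carries the
   induced order.  All notions below are relative to such a carrier S;
   the whole poset P is S = (fun _ => True). *)
Section PosetDefs.
Context {disp : Order.disp_t} {T : porderType disp}.

Definition whole : T -> Prop := fun _ => True.

Definition ub_in (S A : T -> Prop) (u : T) : Prop :=
  S u /\ forall a, A a -> a <= u.

Definition sup_in (S A : T -> Prop) (s : T) : Prop :=
  ub_in S A s /\ forall u, ub_in S A u -> s <= u.

Definition bounded_in (S A : T -> Prop) : Prop := exists u, ub_in S A u.

Definition directed_in (S D : T -> Prop) : Prop :=
  (forall x, D x -> S x) /\ (exists x, D x) /\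
  (forall x y, D x -> D y -> exists z, [/\ D z, x <= z & y <= z]).

Definition cond_complete (S : T -> Prop) : Prop :=
  forall A, (forall x, A x -> S x) -> (exists x, A x) -> bounded_in S A ->
    exists s, sup_in S A s.

Definition way_below_in (S : T -> Prop) (x y : T) : Prop :=
  forall D, directed_in S D -> bounded_in S D -> forall d0, sup_in S D d0 ->
    y <= d0 -> exists d, D d /\ x <= d.

Definition interpolating : Prop :=
  forall x y, way_below_in whole x y ->
    exists z, way_below_in whole x z /\ way_below_in whole z y.

Definition Pstar (x : T) : Prop := exists y, way_below_in whole y x.

Definition kernel_retraction (k : T -> T) (Q : T -> Prop) : Prop :=
  (forall x, Q x <-> (Pstar x /\ k x = x)) /\
  [/\ (forall x, Pstar x -> Q (k x)),
      (forall x, Pstar x -> k (k x) = k x),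
      (forall x y, Pstar x -> Pstar y -> x <= y -> k x <= k y),
      (forall x, Pstar x -> k x <= x) &
      (forall D, directed_in Pstar D -> bounded_in Pstar D ->
         forall s, sup_in Pstar D s ->
           sup_in Q (fun y => exists2 x, D x & y = k x) (k s))].

Definition kernel_retract (Q : T -> Prop) : Prop :=
  exists k, kernel_retraction k Q.

Definition subposet (Q : T -> Prop) : Prop :=
  forall x y, Q x -> Q y -> (way_below_in Q x y <-> way_below_in whole x y).

End PosetDefs.

(* Main.v *)
Require Import Defs.
From mathcomp Require Import all_boot all_order.
Import Order.TTheory.
Local Open Scope order_scope.

Section H.
Context {disp : Order.disp_t} {T : porderType disp}.

Lemma wb_up (y x x' : T) : way_below_in whole y x -> x <= x' -> way_below_in whole y x'.
Proof.
move=> H le D HD HB d0 Hs le'. apply: (H D HD HB d0 Hs). exact: le_trans le le'.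
Qed.

Lemma pstar_up (x x' : T) : Pstar x -> x <= x' -> Pstar x'.
Proof. move=> [y Hy] le; exists y; exact: wb_up _ _ _ Hy le. Qed.

Lemma supQ (k : T -> T) (Q : T -> Prop) : kernel_retraction k Q ->
  cond_complete (@whole disp T) ->
  forall D : T -> Prop, (forall x, D x -> Q x) -> (exists x, D x) ->
        bounded_in whole D ->
        exists s, sup_in whole D s /\ sup_in Q D s.
Proof.
move=> [HQ [Hk1 Hk2 Hmono Hdefl Hdir]] cc D DQ [d Dd] Hb.
have [s [[_ ub] least]] := cc D (fun _ _ => I) (ex_intro _ d Dd) Hb.
have Pd : Pstar d by case: (proj1 (HQ d) (DQ d Dd)).
have Ps : Pstar s := pstar_up _ _ Pd (ub d Dd).
have ubk : ub_in whole D (k s).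
  split=> // a Da.
  have [Pa ka] := proj1 (HQ a) (DQ a Da).
  rewrite -ka; apply: Hmono => //; exact: ub.
have eks : k s = s by apply: le_anti; rewrite Hdefl // least.
have Qs : Q s by apply/HQ.
exists s; split; first by split=> //; split.
split; first by split.
move=> u [_ ubu]; apply: least; split=> //.
Qed.

End H.

Theorem lemma2p4 (disp : Order.disp_t) (T : porderType disp) (Q : T -> Prop) :
  cond_complete (@whole disp T) -> @interpolating disp T -> kernel_retract Q ->
  [/\ cond_complete Q, subposet Q &
      forall D : T -> Prop, (forall x, D x -> Q x) -> (exists x, D x) ->
        bounded_in whole D ->
        exists s, sup_in whole D s /\ sup_in Q D s].
Proof.
move=> cc interp [k Hk].
have S3 := supQ _ _ Hk cc.
have [HQ [Hk1 Hk2 Hmono Hdefl Hdir]] := Hk.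
split=> //.
- move=> A AQ ne [u [Qu ubu]].
  have [s [_ Hs]] := S3 A AQ ne (ex_intro _ u (conj I ubu)).
  by exists s.
- move=> x y Qx Qy; split.
  + move=> Hxy D [_ [[e De] Ddir]] Hb d0 Hd0 yd0.
    have Py : Pstar y by case: (proj1 (HQ y) Qy).
    have [w Hw] := Py.
    have Hwd0 := wb_up _ _ _ Hw yd0.
    have [z [Hwz Hzd0]] := interp _ _ Hwd0.
    have Dw : directed_in whole D by split=> //; split=> //; exists e.
    have [d1 [Dd1 zd1]] := Hzd0 D Dw Hb d0 Hd0 (lexx _).
    have Pd1 : Pstar d1 := pstar_up _ _ (ex_intro _ w Hwz) zd1.
    have [[_ ub0] least0] := Hd0.
    have Pd0 : Pstar d0 := pstar_up _ _ Py yd0.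
    pose D' := fun a => D a /\ Pstar a.
    have D'dir : directed_in Pstar D'.
      split; first by move=> a [].
      split; first by exists d1.
      move=> a b [Da Pa] [Db Pb].
      have [c [Dc ac bc]] := Ddir a b Da Db.
      exists c; split=> //; split=> //; exact: pstar_up _ _ Pa ac.
    have D'sup : sup_in Pstar D' d0.
      split; first by split=> // a [Da _]; exact: ub0.
      move=> u [_ ubu]; apply: least0; split=> // a Da.
      have [c [Dc ac d1c]] := Ddir a d1 Da Dd1.
      apply: le_trans ac _; apply: ubu; split=> //; exact: pstar_up _ _ Pd1 d1c.
    have D'b : bounded_in Pstar D' by exists d0; exact: (proj1 D'sup).
    have Hs := Hdir D' D'dir D'b d0 D'sup.
    pose E := fun yy => exists2 a, D' a & yy = k a.
    have Edir : directed_in Q E.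
      split; first by move=> _ [a [_ Pa] ->]; apply: Hk1.
      split; first by exists (k d1); exists d1.
      move=> _ _ [a [Da Pa] ->] [b [Db Pb] ->].
      have [c [Dc ac bc]] := Ddir a b Da Db.
      have Pc : Pstar c := pstar_up _ _ Pa ac.
      exists (k c); split; first by exists c.
      * exact: Hmono.
      * exact: Hmono.
    have Eb : bounded_in Q E by exists (k d0); exact: (proj1 Hs).
    have ykd0 : y <= k d0.
      have [_ ky] := proj1 (HQ y) Qy.
      rewrite -ky; exact: Hmono.
    have [_ [[a [Da Pa] ->] xka]] := Hxy E Edir Eb (k d0) Hs ykd0.
    exists a; split=> //; exact: le_trans xka (Hdefl a Pa).
  + move=> Hxy D [DQ [ne Ddir]] Hb d0 Hd0 yd0.
    have [u [Qu ubu]] := Hb.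
    have [s [Hsw HsQ]] := S3 D DQ ne (ex_intro _ u (conj I ubu)).
    have es : s = d0.
      apply: le_anti; rewrite (proj2 HsQ _ (proj1 Hd0)) (proj2 Hd0 _ (proj1 HsQ)) //.
    subst d0.
    have Dw : directed_in whole D by split=> //; split.
    have Bw : bounded_in whole D by exists u; split.
    exact: (Hxy D Dw Bw s Hsw yd0).
Qed.
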